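(* Let $n,k,l$ be nonnegative integers with $k+l\le n$, and $\alpha,\beta>-1$. The constrained dual Bernstein polynomials have the B\'ezier–Bernstein representation \[ D^{(n,k,l)}_i(x;\alpha,\beta)=\sum_{j=k}^{n-l}C_{ij}(n,k,l,\alpha,\beta)\,B^n_j(x)\qquad(k\le i\le n-l), \] where \[ C_{ij}(n,k,l,\alpha,\beta):=U_i\,U_j\,c_{i-k,\,j-k}(n-k-l,\ \alpha+2l,\ \beta+2k),\qquad U_i:=\binom{n-k-l}{i-k}\binom{n}{i}^{-1}, \] and $c_{pq}(N,a,b)$ denotes the B\'ezier coefficients of the unconstrained dual Bernstein polynomials, $D^N_p(x;a,b)=\sum_{q=0}^N c_{pq}(N,a,b)B^N_q(x)$ (explicitly, $c_{pq}(N,a,b)=\frac{1}{B(a+1,b+1)}\sum_{m=0}^N\frac{(2m/(a+b+1)+1)(b+1)_m(a+b+1)_m}{m!\,(a+1)_m}Q_m(p;b,a,N)Q_m(q;b,a,N)$).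
   Context: For $a,b>-1$ define the inner product $\langle f,g\rangle_{a,b}:=\int_0^1(1-x)^{a}x^{b}f(x)g(x)\,dx$. Bernstein polynomials: $B^n_i(x)=\binom ni x^i(1-x)^{n-i}$. The unconstrained dual Bernstein polynomials $D^N_p(x;a,b)$, $0\le p\le N$, are the unique polynomials of degree $\le N$ with $\langle D^N_p,B^N_q\rangle_{a,b}=\delta_{pq}$. For $k+l\le n$, $\Pi_n^{(k,l)}$ is the space of polynomials $P$ of degree $\le n$ with $P^{(i)}(0)=0$ for $0\le i\le k-1$ and $P^{(j)}(1)=0$ for $0\le j\le l-1$; it has basis $B^n_k,\ldots,B^n_{n-l}$. The constrained dual Bernstein polynomials $D^{(n,k,l)}_i(x;\alpha,\beta)\in\Pi_n^{(k,l)}$, $k\le i\le n-l$, are the unique elements of $\Pi_n^{(k,l)}$ with $\langle D^{(n,k,l)}_i,B^n_j\rangle_{\alpha,\beta}=\delta_{ij}$ for $i,j=k,\ldots,n-l$. Notation: $(c)_k:=\prod_{j=0}^{k-1}(c+j)$; $B(\lambda,\mu)$ is the beta function; Hahn polynomials $Q_m(x;a,b,N):={}_3F_2(-m,m+a+b+1,-x;a+1,-N;1)$. *)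

(* Defs.v *)
From Stdlib Require Import Reals Lra Lia.
Open Scope R_scope.

Definition rsum (m n : nat) (f : nat -> R) : R :=
  if (n <? m)%nat then 0 else sum_f_R0 (fun j => f (m + j)%nat) (n - m).

Definition Bern (n i : nat) (x : R) : R := C n i * x ^ i * (1 - x) ^ (n - i).

Definition weight (a b x : R) : R := Rpower (1 - x) a * Rpower x b.

Definition improper_int01 (h : R -> R) (v : R) : Prop :=
  forall eps, 0 < eps -> exists delta, 0 < delta /\
    forall s t, 0 < s < delta -> 1 - delta < t < 1 ->
      exists pr : Riemann_integrable h s t, Rabs (RiemannInt pr - v) < eps.

Definition wip (a b : R) (f g : R -> R) (v : R) : Prop :=
  improper_int01 (fun x => weight a b x * f x * g x) v.

Definition kron (i j : nat) : R := if Nat.eqb i j then 1 else 0.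

Fixpoint ffR (m i : nat) : R :=
  match i with
  | O => 1
  | S i' => ffR m i' * (INR m - INR i')
  end.

(* value at x of the i-th derivative of the polynomial sum_{m=0}^n d m x^m *)
Definition pderiv (d : nat -> R) (n i : nat) (x : R) : R :=
  sum_f_R0 (fun m => d m * ffR m i * x ^ (m - i)) n.

Definition is_poly_le (n : nat) (f : R -> R) : Prop :=
  exists d : nat -> R, forall x, f x = sum_f_R0 (fun m => d m * x ^ m) n.

Definition in_Pi (n k l : nat) (f : R -> R) : Prop :=
  exists d : nat -> R,
    (forall x, f x = sum_f_R0 (fun m => d m * x ^ m) n) /\
    (forall i, (i < k)%nat -> pderiv d n i 0 = 0) /\
    (forall j, (j < l)%nat -> pderiv d n j 1 = 0).

Definition is_udual (N : nat) (a b : R) (p : nat) (D : R -> R) : Prop :=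
  is_poly_le N D /\
  forall q, (q <= N)%nat -> wip a b D (Bern N q) (kron p q).

Definition is_cdual (n k l : nat) (al be : R) (i : nat) (D : R -> R) : Prop :=
  in_Pi n k l D /\
  forall j, (k <= j <= n - l)%nat -> wip al be D (Bern n j) (kron i j).

Definition U (n k l i : nat) : R := C (n - k - l) (i - k) / C n i.

(* C_ij(n,k,l,al,be) given the Bezier coefficients c of the unconstrained
   duals for (N,a,b) = (n-k-l, al+2l, be+2k) *)
Definition Ccoef (c : nat -> nat -> R) (n k l i j : nat) : R :=
  U n k l i * U n k l j * c (i - k)%nat (j - k)%nat.

(* Main.v *)
Require Import Defs.
From Stdlib Require Import Reals Lra Lia.
Open Scope R_scope.

Lemma sum_zero (f : nat -> R) N : (forall m, (m <= N)%nat -> f m = 0) -> sum_f_R0 f N = 0.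
Proof.
  induction N; intros H; simpl.
  - apply H; lia.
  - rewrite IHN by (intros; apply H; lia). rewrite H by lia. ring.
Qed.

Lemma sum_single n i (f : nat -> R) : (i <= n)%nat -> (forall m, m <> i -> f m = 0) -> sum_f_R0 f n = f i.
Proof.
  induction n; intros Hi H.
  - assert (i = 0)%nat by lia. subst. reflexivity.
  - simpl. destruct (Nat.eq_dec i (S n)).
    + subst. rewrite sum_zero. ring. intros m Hm. apply H. lia.
    + rewrite IHn by (auto; lia). rewrite (H (S n)) by lia. ring.
Qed.

Lemma shift_sum k : forall n (f : nat -> R), (k <= n)%nat -> (forall t, (t < k)%nat -> f t = 0) ->
  sum_f_R0 f n = sum_f_R0 (fun r => f (k + r)%nat) (n - k).
Proof.
  induction k; intros n f Hk Hf.
  - rewrite Nat.sub_0_r. apply sum_eq. intros. reflexivity.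
  - rewrite decomp_sum by lia. rewrite Hf by lia. rewrite Rplus_0_l.
    rewrite (IHk (pred n) (fun i => f (S i))) by (try lia; intros; apply Hf; lia).
    replace (n - S k)%nat with (pred n - k)%nat by lia.
    apply sum_eq. intros. reflexivity.
Qed.

Lemma ffR_S m j : ffR (S m) (S j) = INR (S m) * ffR m j.
Proof.
  revert m. induction j; intros m.
  - simpl. ring.
  - change (ffR (S m) (S (S j))) with (ffR (S m) (S j) * (INR (S m) - INR (S j))).
    rewrite IHj. change (ffR m (S j)) with (ffR m j * (INR m - INR j)).
    rewrite !S_INR. ring.
Qed.

Lemma ffR_diff m j : ffR (S m) (S j) - ffR m (S j) = INR (S j) * ffR m j.
Proof.
  rewrite ffR_S. change (ffR m (S j)) with (ffR m j * (INR m - INR j)).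
  rewrite !S_INR. ring.
Qed.

Lemma ffR_zero m i : (m < i)%nat -> ffR m i = 0.
Proof.
  induction i; intros H. lia.
  simpl. destruct (Nat.eq_dec m i).
  - subst. ring.
  - rewrite IHi by lia. ring.
Qed.

Lemma ffR_pos m i : (i <= m)%nat -> 0 < ffR m i.
Proof.
  induction i; intros H; simpl. lra.
  apply Rmult_lt_0_compat. apply IHi; lia.
  apply Rlt_0_minus. apply lt_INR. lia.
Qed.

Definition Zs (d : nat -> R) n := forall m, (n < m)%nat -> d m = 0.
Definition P0 (d : nat -> R) k := forall m, (m < k)%nat -> d m = 0.
Definition P1 (d : nat -> R) n l := forall j, (j < l)%nat -> sum_f_R0 (fun m => d m * ffR m j) n = 0.
Definition shift (d : nat -> R) m := match m with O => 0 | S m' => d m' end.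
Definition polyv (d : nat -> R) n x := sum_f_R0 (fun m => d m * x ^ m) n.
Definition om (q : nat -> R) m := q m - shift q m.

Lemma sum_shift_mul d n (F : nat -> R) :
  sum_f_R0 (fun m => shift d m * F m) (S n) = sum_f_R0 (fun m => d m * F (S m)) n.
Proof.
  rewrite decomp_sum by lia. simpl shift. rewrite Rmult_0_l, Rplus_0_l. reflexivity.
Qed.

Lemma om_sum q n (F : nat -> R) : Zs q n ->
  sum_f_R0 (fun m => om q m * F m) (S n) = sum_f_R0 (fun m => q m * (F m - F (S m))) n.
Proof.
  intros Z. unfold om.
  rewrite (sum_eq _ (fun m => q m * F m - shift q m * F m)) by (intros; ring).
  rewrite minus_sum, sum_shift_mul, tech5, (Z (S n)) by lia.
  rewrite (sum_eq (fun m => q m * (F m - F (S m))) (fun m => q m * F m - q m * F (S m))) by (intros; ring).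
  rewrite minus_sum. ring.
Qed.

Lemma om_P1 q n l : Zs q n -> P1 q n l -> P1 (om q) (S n) (S l).
Proof.
  intros Z H j Hj. rewrite om_sum by auto.
  destruct j.
  - apply sum_zero. intros. simpl. ring.
  - rewrite (sum_eq _ (fun m => q m * ffR m j * (- INR (S j)))).
    + rewrite <- scal_sum. rewrite (H j) by lia. ring.
    + intros. replace (ffR i (S j) - ffR (S i) (S j)) with (-(INR (S j) * ffR i j)) by (rewrite <- ffR_diff; ring). ring.
Qed.

Lemma om_P1_inv q n l : Zs q n -> P1 (om q) (S n) (S l) -> P1 q n l.
Proof.
  intros Z H j Hj. specialize (H (S j) ltac:(lia)). rewrite om_sum in H by auto.
  rewrite (sum_eq _ (fun m => q m * ffR m j * (- INR (S j)))) in H.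
  - rewrite <- scal_sum in H.
    apply Rmult_integral in H. destruct H as [H|H]; auto.
    exfalso. assert (0 < INR (S j)) by (apply lt_0_INR; lia). lra.
  - intros. replace (ffR i (S j) - ffR (S i) (S j)) with (-(INR (S j) * ffR i j)) by (rewrite <- ffR_diff; ring). ring.
Qed.

Lemma polyv_om q n x : Zs q n -> polyv (om q) (S n) x = (1 - x) * polyv q n x.
Proof.
  intros Z. unfold polyv. rewrite (om_sum q n (fun m => x ^ m)) by auto.
  rewrite scal_sum. apply sum_eq. intros. simpl. ring.
Qed.

Lemma Zs_om q n : Zs q n -> Zs (om q) (S n).
Proof.
  intros Z m Hm. unfold om, shift. destruct m. lia. rewrite !Z by lia. ring.
Qed.

Lemma P0_om q k : P0 q k -> P0 (om q) k.
Proof.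
  intros Z m Hm. unfold om, shift. destruct m. rewrite Z by lia. ring. rewrite !Z by lia. ring.
Qed.

Lemma build_l k l : forall M e, Zs e M -> P0 e k -> exists d, Zs d (M+l) /\ P0 d k /\ P1 d (M+l) l /\
  forall x, polyv d (M+l) x = (1-x)^l * polyv e M x.
Proof.
  induction l; intros M e Z H0.
  - exists e. rewrite Nat.add_0_r. repeat split; auto.
    intros j Hj; lia. intros; simpl; ring.
  - destruct (IHl M e Z H0) as [d [Zd [P0d [P1d V]]]].
    exists (om d). replace (M + S l)%nat with (S (M + l)) by lia.
    repeat split.
    + apply Zs_om; auto.
    + apply P0_om; auto.
    + apply om_P1; auto.
    + intros x. rewrite polyv_om by auto. rewrite V. simpl. ring.
Qed.

Lemma build_k k N e : Zs e N -> exists d, Zs d (N+k) /\ P0 d k /\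
  forall x, polyv d (N+k) x = x^k * polyv e N x.
Proof.
  intros Z. exists (fun m => if (k <=? m)%nat then e (m - k)%nat else 0).
  repeat split.
  - intros m Hm. destruct (k <=? m)%nat eqn:E. apply Z. apply Nat.leb_le in E. lia. reflexivity.
  - intros m Hm. destruct (k <=? m)%nat eqn:E. apply Nat.leb_le in E. lia. reflexivity.
  - intros x. unfold polyv. rewrite (shift_sum k) by (lia || (intros t Ht;
      destruct (k <=? t)%nat eqn:E; [apply Nat.leb_le in E; lia | ring])).
    replace (N + k - k)%nat with N by lia.
    rewrite scal_sum. apply sum_eq. intros i Hi.
    destruct (k <=? k + i)%nat eqn:E. 2:{ apply Nat.leb_gt in E. lia. }
    replace (k + i - k)%nat with i by lia. rewrite pow_add. ring.
Qed.

Lemma peel1 dz n : Zs dz (S n) -> sum_f_R0 dz (S n) = 0 -> exists q, Zs q n /\ forall m, dz m = om q m.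
Proof.
  intros Z S0. exists (fun m => if (m <=? n)%nat then sum_f_R0 dz m else 0). split.
  - intros m Hm. destruct (m <=? n)%nat eqn:E. apply Nat.leb_le in E. lia. reflexivity.
  - intros m. unfold om, shift. destruct m.
    + simpl. ring.
    + destruct (S m <=? n)%nat eqn:E1; destruct (m <=? n)%nat eqn:E2.
      * simpl. ring.
      * apply Nat.leb_le in E1. apply Nat.leb_gt in E2. lia.
      * apply Nat.leb_gt in E1. apply Nat.leb_le in E2. assert (m = n) by lia. subst.
        rewrite tech5 in S0. lra.
      * apply Nat.leb_gt in E1. apply Nat.leb_gt in E2. rewrite Z by lia. ring.
Qed.

Lemma P1_ext d d' n l : (forall m, d m = d' m) -> P1 d n l -> P1 d' n l.
Proof.
  intros E H j Hj. rewrite <- (H j Hj). apply sum_eq. intros. rewrite E. reflexivity.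
Qed.

Lemma peel_l k : forall l n dz, (l <= n)%nat -> Zs dz n -> P1 dz n l -> P0 dz k ->
  exists q, Zs q (n-l) /\ P0 q k /\ forall x, polyv dz n x = (1-x)^l * polyv q (n-l) x.
Proof.
  induction l; intros n dz Hl Z H1 H0.
  - exists dz. rewrite Nat.sub_0_r. repeat split; auto. intros; simpl; ring.
  - destruct n as [|n]. lia.
    assert (S0 : sum_f_R0 dz (S n) = 0).
    { rewrite <- (H1 0%nat) by lia. apply sum_eq. intros. simpl. ring. }
    destruct (peel1 dz n Z S0) as [q [Zq E]].
    assert (H1q : P1 q n l).
    { apply om_P1_inv; auto. apply (P1_ext dz); auto. }
    assert (H0q : P0 q k).
    { intros m Hm. assert (forall t, (t <= m)%nat -> q t = 0) as HH.
      { induction t; intros Ht.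
        - pose proof (E 0%nat) as E0. unfold om, shift in E0. rewrite H0 in E0 by lia. lra.
        - pose proof (E (S t)) as E0. unfold om, shift in E0. rewrite H0 in E0 by lia.
          rewrite IHt in E0 by lia. lra. }
      apply HH. lia. }
    destruct (IHl n q ltac:(lia) Zq H1q H0q) as [q' [Zq' [P0q' V]]].
    exists q'. replace (S n - S l)%nat with (n - l)%nat by lia. repeat split; auto.
    intros x. unfold polyv at 1. rewrite (sum_eq _ (fun m => om q m * x ^ m)) by (intros; rewrite E; reflexivity).
    change (sum_f_R0 (fun m => om q m * x ^ m) (S n)) with (polyv (om q) (S n) x).
    rewrite polyv_om by auto. rewrite V. simpl. ring.
Qed.

Lemma peel_k q N k : Zs q N -> P0 q k -> (k <= N)%nat ->
  forall x, polyv q N x = x^k * polyv (fun m => q (k+m)%nat) (N-k) x.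
Proof.
  intros Z H0 Hk x. unfold polyv. rewrite (shift_sum k) by (try lia; intros t Ht; rewrite H0 by lia; ring).
  rewrite scal_sum. apply sum_eq. intros. rewrite pow_add. ring.
Qed.

Lemma C_pos n p : (p <= n)%nat -> 0 < C n p.
Proof.
  intros H. unfold C. apply Rdiv_lt_0_compat. apply INR_fact_lt_0.
  apply Rmult_lt_0_compat; apply INR_fact_lt_0.
Qed.

Lemma Bern_factor n k l j x : (k <= j)%nat -> (j <= n - l)%nat -> (k + l <= n)%nat ->
  U n k l j * Bern n j x = x^k * (1-x)^l * Bern (n-k-l) (j-k) x.
Proof.
  intros H1 H2 H3. unfold U, Bern.
  assert (0 < C n j) by (apply C_pos; lia).
  replace (x ^ j) with (x^k * x^(j-k)) by (rewrite <- pow_add; f_equal; lia).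
  replace (n - j)%nat with (l + (n - k - l - (j - k)))%nat by lia.
  rewrite !pow_add. field. lra.
Qed.

Lemma mono_span N m : (m <= N)%nat -> forall x, x^m =
  sum_f_R0 (fun q => (if (m <=? q)%nat then C (N-m) (q-m) / C N q else 0) * Bern N q x) N.
Proof.
  intros Hm x. rewrite (shift_sum m) by (lia || (intros t Ht;
      destruct (m <=? t)%nat eqn:E; [apply Nat.leb_le in E; lia | ring])).
  transitivity (x^m * (x + (1 - x))^(N-m)).
  { replace (x + (1-x)) with 1 by ring. rewrite pow1. ring. }
  rewrite binomial, scal_sum. apply sum_eq. intros i Hi.
  destruct (m <=? m + i)%nat eqn:E. 2:{ apply Nat.leb_gt in E. lia. }
  replace (m + i - m)%nat with i by lia. unfold Bern.
  assert (0 < C N (m+i)) by (apply C_pos; lia).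
  replace (N - (m + i))%nat with (N - m - i)%nat by lia.
  rewrite pow_add. field. lra.
Qed.

Definition SpanB N (f : R -> R) := exists b : nat -> R, forall x, f x = sum_f_R0 (fun q => b q * Bern N q x) N.

Lemma span_polyv N h : forall N', (N' <= N)%nat -> SpanB N (polyv h N').
Proof.
  induction N'; intros HN.
  - exists (fun q => h 0%nat * (if (0 <=? q)%nat then C (N-0) (q-0) / C N q else 0)).
    intros x. change (polyv h 0 x) with (h 0%nat * x^0). rewrite (mono_span N 0 ltac:(lia) x), scal_sum.
    apply sum_eq. intros. ring.
  - destruct (IHN' ltac:(lia)) as [b Hb].
    exists (fun q => b q + h (S N') * (if (S N' <=? q)%nat then C (N-S N') (q-S N') / C N q else 0)).
    intros x. unfold polyv. rewrite tech5. fold (polyv h N' x). rewrite Hb.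
    rewrite (mono_span N (S N') ltac:(lia) x), scal_sum, <- plus_sum.
    apply sum_eq. intros. ring.
Qed.

Lemma ii_ext f g v : (forall x, 0 < x < 1 -> f x = g x) -> improper_int01 f v -> improper_int01 g v.
Proof.
  intros E H eps Heps. destruct (H eps Heps) as [d [Hd Hst]].
  exists (Rmin d (1/2)). split. apply Rmin_pos; lra.
  intros s t Hs Ht.
  pose proof (Rmin_l d (1/2)). pose proof (Rmin_r d (1/2)).
  destruct (Hst s t ltac:(lra) ltac:(lra)) as [pr Hpr].
  assert (Eq : forall x, Rmin s t <= x <= Rmax s t -> f x = g x).
  { intros x Hx. rewrite Rmin_left in Hx by lra. rewrite Rmax_right in Hx by lra. apply E. lra. }
  exists (Riemann_integrable_ext g Eq pr).
  replace (RiemannInt (Riemann_integrable_ext g Eq pr)) with (RiemannInt pr); auto.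
  apply Rle_antisym; apply RiemannInt_P19; try lra; intros x Hx; rewrite E by lra; lra.
Qed.

Lemma ii_lin f g u v a : improper_int01 f u -> improper_int01 g v ->
  improper_int01 (fun x => f x + a * g x) (u + a * v).
Proof.
  intros Hf Hg eps Heps.
  assert (Ha : 0 < Rabs a + 1) by (pose proof (Rabs_pos a); lra).
  destruct (Hf (eps/2) ltac:(lra)) as [d1 [Hd1 H1]].
  assert (He2 : 0 < eps / (2 * (Rabs a + 1))) by (apply Rdiv_lt_0_compat; lra).
  destruct (Hg _ He2) as [d2 [Hd2 H2]].
  exists (Rmin d1 d2). split. apply Rmin_pos; lra.
  intros s t Hs Ht. pose proof (Rmin_l d1 d2). pose proof (Rmin_r d1 d2).
  destruct (H1 s t ltac:(lra) ltac:(lra)) as [pr1 Hp1].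
  destruct (H2 s t ltac:(lra) ltac:(lra)) as [pr2 Hp2].
  exists (RiemannInt_P10 a pr1 pr2).
  pose proof (RiemannInt_P13 pr1 pr2 (RiemannInt_P10 a pr1 pr2)) as E13.
  cbv beta in E13 |- *. rewrite E13.
  replace (RiemannInt pr1 + a * RiemannInt pr2 - (u + a * v)) with
    ((RiemannInt pr1 - u) + a * (RiemannInt pr2 - v)) by ring.
  eapply Rle_lt_trans. apply Rabs_triang. rewrite Rabs_mult.
  assert (Rabs a * Rabs (RiemannInt pr2 - v) <= Rabs a * (eps / (2 * (Rabs a + 1)))).
  { apply Rmult_le_compat_l. apply Rabs_pos. lra. }
  assert (Rabs a * (eps / (2 * (Rabs a + 1))) < eps / 2).
  { unfold Rdiv. rewrite Rinv_mult. 
    replace (Rabs a * (eps * (/ 2 * / (Rabs a + 1)))) with ((eps/2) * (Rabs a / (Rabs a + 1))) by (unfold Rdiv; ring).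
    assert (Rabs a / (Rabs a + 1) < 1).
    { apply Rmult_lt_reg_r with (Rabs a + 1). lra. unfold Rdiv. rewrite Rmult_assoc, Rinv_l by lra. lra. }
    assert (0 < eps / 2) by lra. nra. }
  lra.
Qed.

Lemma ii_zero : improper_int01 (fun _ => 0) 0.
Proof.
  intros eps Heps. exists 1. split. lra. intros s t Hs Ht.
  set (pr := RiemannInt_P14 s t 0 : Riemann_integrable (fun _ => 0) s t).
  exists pr. assert (E : RiemannInt pr = 0 * (t - s)) by exact (RiemannInt_P15 pr).
  rewrite E, Rmult_0_l, Rminus_0_r, Rabs_R0. lra.
Qed.

Lemma ii_scal f u a : improper_int01 f u -> improper_int01 (fun x => a * f x) (a * u).
Proof.
  intros H. pose proof (ii_lin _ _ _ _ a ii_zero H) as H'. rewrite Rplus_0_l in H'.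
  apply (ii_ext _ _ _ (fun x _ => Rplus_0_l _) H').
Qed.

Lemma ii_sum N (a : nat -> R) (f : nat -> R -> R) : (forall q, (q <= N)%nat -> improper_int01 (f q) 0) ->
  improper_int01 (fun x => sum_f_R0 (fun q => a q * f q x) N) 0.
Proof.
  induction N; intros H.
  - simpl. rewrite <- (Rmult_0_r (a 0%nat)). apply ii_scal. apply H. lia.
  - simpl. pose proof (ii_lin _ _ _ _ (a (S N)) (IHN ltac:(intros; apply H; lia)) (H (S N) ltac:(lia))) as H'.
    rewrite Rmult_0_r, Rplus_0_r in H'. exact H'.
Qed.

Lemma ii_pos_zero g : improper_int01 g 0 -> (forall x, 0 < x < 1 -> 0 <= g x) ->
  (forall x, 0 < x < 1 -> continuity_pt g x) -> forall x, 0 < x < 1 -> g x = 0.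
Proof.
  intros H Hp Hc x0 Hx0.
  destruct (Req_dec (g x0) 0) as [E|E]; auto. exfalso.
  set (c := g x0). assert (Hcp : 0 < c) by (pose proof (Hp x0 Hx0); unfold c in *; lra).
  pose proof (Hc x0 Hx0) as C0. unfold continuity_pt, continue_in, limit1_in, limit_in in C0.
  destruct (C0 (c/2) ltac:(lra)) as [alp [Halp Hal]].
  set (r := Rmin (alp/2) (Rmin (x0/2) ((1-x0)/2))).
  assert (Hr1 : r <= alp/2) by apply Rmin_l.
  assert (Hr2 : r <= x0/2) by (eapply Rle_trans; [apply Rmin_r | apply Rmin_l]).
  assert (Hr3 : r <= (1-x0)/2) by (eapply Rle_trans; [apply Rmin_r | apply Rmin_r]).
  assert (Hr : 0 < r) by (unfold r; repeat apply Rmin_pos; lra).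
  set (a := x0 - r). set (b := x0 + r).
  destruct (H (c * r) ltac:(nra)) as [d [Hd Hst]].
  set (s := Rmin d a / 2). set (t := 1 - Rmin d (1-b) / 2).
  assert (Hs1 : Rmin d a <= d) by apply Rmin_l. assert (Hs2 : Rmin d a <= a) by apply Rmin_r.
  assert (Ht1 : Rmin d (1-b) <= d) by apply Rmin_l. assert (Ht2 : Rmin d (1-b) <= 1-b) by apply Rmin_r.
  assert (Hs0 : 0 < Rmin d a) by (apply Rmin_pos; unfold a; lra).
  assert (Ht0 : 0 < Rmin d (1-b)) by (apply Rmin_pos; unfold b; lra).
  destruct (Hst s t ltac:(unfold s; lra) ltac:(unfold t; lra)) as [pr Hpr].
  assert (Hsa : s <= a <= t) by (unfold s, t, a, b in *; lra).
  pose proof (RiemannInt_P22 pr Hsa) as pr_sa. pose proof (RiemannInt_P23 pr Hsa) as pr_at.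
  assert (Hab : a <= b <= t) by (unfold s, t, a, b in *; lra).
  pose proof (RiemannInt_P22 pr_at Hab) as pr_ab. pose proof (RiemannInt_P23 pr_at Hab) as pr_bt.
  pose proof (RiemannInt_P26 pr_sa pr_at pr) as C1.
  pose proof (RiemannInt_P26 pr_ab pr_bt pr_at) as C2.
  assert (I1 : 0 <= RiemannInt pr_sa).
  { rewrite <- (Rmult_0_l (a - s)), <- (RiemannInt_P15 (RiemannInt_P14 s a 0)).
    apply RiemannInt_P19. lra. intros y Hy. unfold fct_cte. apply Hp. unfold s, a in *; lra. }
  assert (I3 : 0 <= RiemannInt pr_bt).
  { rewrite <- (Rmult_0_l (t - b)), <- (RiemannInt_P15 (RiemannInt_P14 b t 0)).
    apply RiemannInt_P19. lra. intros y Hy. unfold fct_cte. apply Hp. unfold t, b in *; lra. }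
  assert (I2 : c / 2 * (b - a) <= RiemannInt pr_ab).
  { rewrite <- (RiemannInt_P15 (RiemannInt_P14 a b (c/2))).
    apply RiemannInt_P19. lra. intros y Hy. unfold fct_cte.
    destruct (Req_dec y x0) as [->|Hne]. { unfold c in *. lra. }
    assert (Hy' : D_x no_cond x0 y /\ dist R_met y x0 < alp).
    { split. split. exact I. auto.
      simpl. unfold Rdist. unfold a, b in Hy. apply Rabs_def1; lra. }
    specialize (Hal y Hy'). simpl in Hal. unfold Rdist in Hal. fold c in Hal.
    apply Rabs_def2 in Hal. lra. }
  assert (Hba : b - a = 2 * r) by (unfold a, b; ring).
  rewrite Hba in I2.
  rewrite Rminus_0_r in Hpr. apply Rabs_def2 in Hpr. lra.
Qed.

Lemma cont_polyv d n x : continuity_pt (fun y => polyv d n y) x.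
Proof.
  induction n.
  - change (continuity_pt (fun y => d 0%nat * y^0) x).
    apply (continuity_pt_scal (fun y => y^0) (d 0%nat)).
    apply derivable_continuous_pt. apply derivable_pt_pow.
  - change (continuity_pt (fun y => polyv d n y + d (S n) * y^(S n)) x).
    apply (continuity_pt_plus (fun y => polyv d n y) (fun y => d (S n) * y ^ S n)); auto.
    apply (continuity_pt_scal (fun y => y^(S n)) (d (S n))).
    apply derivable_continuous_pt. apply derivable_pt_pow.
Qed.

Lemma cont_Rpower z a : 0 < z -> continuity_pt (fun y => Rpower y a) z.
Proof.
  intros Hz. apply derivable_continuous_pt. exists (a * Rpower z (a - 1)).
  apply derivable_pt_lim_power. auto.
Qed.

Lemma cont_weight a b x : 0 < x < 1 -> continuity_pt (weight a b) x.
Proof.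
  intros Hx. unfold weight.
  apply (continuity_pt_mult (fun y => Rpower (1 - y) a) (fun y => Rpower y b)).
  - apply (continuity_pt_comp (fun y => 1 - y) (fun z => Rpower z a)).
    + apply derivable_continuous_pt.
      apply (derivable_pt_minus (fct_cte 1) id x (derivable_pt_const 1 x) (derivable_pt_id x)).
    + apply cont_Rpower. lra.
  - apply cont_Rpower. lra.
Qed.

Lemma pow_le1 y m : 0 <= y <= 1 -> y ^ m <= 1.
Proof.
  intros H. induction m; simpl. lra.
  replace 1 with (1 * 1) by ring. apply Rmult_le_compat; try lra. apply pow_le. lra.
Qed.

Lemma poly_zero n : forall d, (forall x, 0 < x < 1 -> polyv d n x = 0) -> forall x, polyv d n x = 0.
Proof.
  induction n; intros d H x.
  - pose proof (H (1/2) ltac:(lra)) as H0. unfold polyv in *. simpl in *. lra.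
  - assert (Dec : forall y, polyv d (S n) y = d 0%nat + y * polyv (fun m => d (S m)) n y).
    { intros y. unfold polyv. rewrite decomp_sum by lia. simpl pred. rewrite scal_sum.
      f_equal. simpl. ring. apply sum_eq. intros. simpl. ring. }
    set (M := sum_f_R0 (fun m => Rabs (d (S m))) n).
    assert (HM0 : 0 <= M).
    { unfold M. clear. induction n; simpl. apply Rabs_pos. pose proof (Rabs_pos (d (S (S n)))). lra. }
    assert (Bnd : forall y, 0 < y < 1 -> Rabs (polyv (fun m => d (S m)) n y) <= M).
    { intros y Hy. unfold polyv. eapply Rle_trans. apply Rsum_abs. apply sum_Rle.
      intros m Hm. rewrite Rabs_mult, <- RPow_abs. rewrite (Rabs_right y) by lra.
      pose proof (pow_le1 y m ltac:(lra)). pose proof (Rabs_pos (d (S m))).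
      pose proof (pow_le y m ltac:(lra)). nra. }
    assert (D0 : d 0%nat = 0).
    { destruct (Req_dec (d 0%nat) 0) as [E|E]; auto. exfalso.
      assert (Hd : 0 < Rabs (d 0%nat)) by (apply Rabs_pos_lt; auto).
      set (y := Rmin (1/2) (Rabs (d 0%nat) / (2 * (M + 1)))).
      assert (Hy1 : y <= 1/2) by apply Rmin_l.
      assert (Hy2 : y <= Rabs (d 0%nat) / (2 * (M + 1))) by apply Rmin_r.
      assert (Hy0 : 0 < y) by (apply Rmin_pos; [lra | apply Rdiv_lt_0_compat; lra]).
      pose proof (H y ltac:(lra)) as Hz. rewrite Dec in Hz.
      pose proof (Bnd y ltac:(lra)) as B.
      assert (E1 : d 0%nat = - (y * polyv (fun m => d (S m)) n y)) by lra.
      assert (Rabs (d 0%nat) <= y * M).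
      { rewrite E1, Rabs_Ropp, Rabs_mult, (Rabs_right y) by lra. apply Rmult_le_compat_l; lra. }
      assert (y * M <= Rabs (d 0%nat) / (2 * (M + 1)) * M) by (apply Rmult_le_compat_r; lra).
      assert (Rabs (d 0%nat) / (2 * (M + 1)) * M < Rabs (d 0%nat)).
      { unfold Rdiv. apply Rmult_lt_reg_r with (2 * (M + 1)). lra.
        replace (Rabs (d 0%nat) * / (2 * (M + 1)) * M * (2 * (M + 1))) with (Rabs (d 0%nat) * M)
          by (field; lra). nra. }
      lra. }
    assert (IHp : forall y, polyv (fun m => d (S m)) n y = 0).
    { apply IHn. intros y Hy. pose proof (H y Hy) as Hz. rewrite Dec, D0 in Hz.
      assert (y * polyv (fun m => d (S m)) n y = 0) as Hz' by lra.
      apply Rmult_integral in Hz'. destruct Hz'; auto. lra. }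
    rewrite Dec, D0, IHp. ring.
Qed.

Lemma weight_shift al be k l x : 0 < x < 1 ->
  weight (al + 2 * INR l) (be + 2 * INR k) x = weight al be x * ((1-x)^l * x^k)^2.
Proof.
  intros Hx. unfold weight. rewrite !Rpower_plus.
  replace (2 * INR l) with (INR (l + l)) by (rewrite plus_INR; ring).
  replace (2 * INR k) with (INR (k + k)) by (rewrite plus_INR; ring).
  rewrite !Rpower_pow by lra. rewrite !pow_add. ring.
Qed.

Lemma U_pos n k l j : (k <= j)%nat -> (j <= n - l)%nat -> (k + l <= n)%nat -> 0 < U n k l j.
Proof.
  intros. unfold U. apply Rdiv_lt_0_compat; apply C_pos; lia.
Qed.

Lemma kron_U n k l i j : (k <= i)%nat -> (k <= j)%nat -> U n k l i / U n k l j * kron (i - k) (j - k) = kron i j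
  \/ U n k l j = 0.
Proof.
  intros. unfold kron. destruct (Nat.eqb_spec i j).
  - subst. rewrite Nat.eqb_refl. destruct (Req_dec (U n k l j) 0). right; auto. left. field. auto.
  - assert ((i - k)%nat <> (j - k)%nat) by lia. apply Nat.eqb_neq in H1. rewrite H1. left. ring.
Qed.

Lemma pderiv_eq0 d n i : pderiv d n i 0 = if (i <=? n)%nat then d i * ffR i i else 0.
Proof.
  unfold pderiv. destruct (i <=? n)%nat eqn:E.
  - apply Nat.leb_le in E. rewrite (sum_single n i).
    + rewrite Nat.sub_diag. simpl. ring.
    + auto.
    + intros m Hm. destruct (Nat.lt_ge_cases m i).
      * rewrite ffR_zero by auto. ring.
      * rewrite pow_i by lia. ring.
  - apply Nat.leb_gt in E. apply sum_zero. intros m Hm. rewrite ffR_zero by lia. ring.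
Qed.

Lemma pderiv_1 d n j : pderiv d n j 1 = sum_f_R0 (fun m => d m * ffR m j) n.
Proof. unfold pderiv. apply sum_eq. intros. rewrite pow1. ring. Qed.

Lemma in_Pi_of n k l d f : (k <= n)%nat -> P0 d k -> P1 d n l -> (forall x, f x = polyv d n x) -> in_Pi n k l f.
Proof.
  intros Hk H0 H1 Hf. exists d. repeat split.
  - exact Hf.
  - intros i Hi. rewrite pderiv_eq0. destruct (i <=? n)%nat; [rewrite H0 by lia|]; ring.
  - intros j Hj. rewrite pderiv_1. apply H1. auto.
Qed.

Lemma in_Pi_sub n k l f g : in_Pi n k l f -> in_Pi n k l g -> in_Pi n k l (fun x => f x - g x).
Proof.
  intros [d1 [E1 [A1 B1]]] [d2 [E2 [A2 B2]]]. exists (fun m => d1 m - d2 m). repeat split.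
  - intros x. rewrite E1, E2, <- minus_sum. apply sum_eq. intros. ring.
  - intros i Hi. unfold pderiv. rewrite (sum_eq _ (fun m => d1 m * ffR m i * 0 ^ (m - i) - d2 m * ffR m i * 0 ^ (m - i)))
      by (intros; ring). rewrite minus_sum. fold (pderiv d1 n i 0). fold (pderiv d2 n i 0). rewrite A1, A2 by auto. ring.
  - intros i Hi. unfold pderiv. rewrite (sum_eq _ (fun m => d1 m * ffR m i * 1 ^ (m - i) - d2 m * ffR m i * 1 ^ (m - i)))
      by (intros; ring). rewrite minus_sum. fold (pderiv d1 n i 1). fold (pderiv d2 n i 1). rewrite B1, B2 by auto. ring.
Qed.

Lemma Pi_coeffs n k l f : (k <= n)%nat -> in_Pi n k l f -> exists dz, Zs dz n /\ P0 dz k /\ P1 dz n l /\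
  forall x, f x = polyv dz n x.
Proof.
  intros Hk [d [E [A B]]]. exists (fun m => if (m <=? n)%nat then d m else 0). repeat split.
  - intros m Hm. destruct (m <=? n)%nat eqn:Em; auto. apply Nat.leb_le in Em. lia.
  - intros m Hm. specialize (A m Hm). rewrite pderiv_eq0 in A.
    assert (Em : (m <=? n)%nat = true) by (apply Nat.leb_le; lia). rewrite Em in A |- *.
    pose proof (ffR_pos m m (le_n m)). apply Rmult_integral in A. destruct A; auto. lra.
  - intros j Hj. rewrite <- (B j Hj), pderiv_1. apply sum_eq. intros m Hm.
    assert (Em : (m <=? n)%nat = true) by (apply Nat.leb_le; lia). rewrite Em. ring.
  - intros x. rewrite E. unfold polyv. apply sum_eq. intros m Hm.
    assert (Em : (m <=? n)%nat = true) by (apply Nat.leb_le; lia). rewrite Em. ring.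
Qed.

Theorem theorem3p2 (n k l : nat) (al be : R) (c : nat -> nat -> R) :
  (k + l <= n)%nat -> -1 < al -> -1 < be ->
  (forall p, (p <= n - k - l)%nat ->
     is_udual (n - k - l) (al + 2 * INR l) (be + 2 * INR k) p
       (fun x => sum_f_R0 (fun q => c p q * Bern (n - k - l) q x) (n - k - l))) ->
  forall i, (k <= i <= n - l)%nat ->
    is_cdual n k l al be i
      (fun x => rsum k (n - l) (fun j => Ccoef c n k l i j * Bern n j x)) /\
    (forall D : R -> R, is_cdual n k l al be i D ->
       forall x, D x = rsum k (n - l) (fun j => Ccoef c n k l i j * Bern n j x)).
Proof.
  intros Hkl Hal Hbe Hc i Hi.
  set (D0 := fun x => rsum k (n - l) (fun j => Ccoef c n k l i j * Bern n j x)).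
  set (N := (n - k - l)%nat) in *.
  set (g := fun x => sum_f_R0 (fun q => c (i - k)%nat q * Bern N q x) N).
  assert (Hg : is_udual N (al + 2 * INR l) (be + 2 * INR k) (i - k) g) by (apply Hc; unfold N; lia).
  assert (HD0 : forall x, D0 x = U n k l i * (x^k * (1-x)^l * g x)).
  { intros x. unfold D0, rsum. destruct (n - l <? k)%nat eqn:E. { apply Nat.ltb_lt in E; lia. }
    replace (n - l - k)%nat with N by (unfold N; lia). unfold g.
    rewrite scal_sum, scal_sum. apply sum_eq. intros r Hr. unfold Ccoef.
    pose proof (Bern_factor n k l (k+r) x ltac:(lia) ltac:(unfold N in Hr; lia) Hkl) as BF.
    replace (k + r - k)%nat with r in * by lia. fold N in BF.
    transitivity (U n k l i * c (i - k)%nat r * (U n k l (k + r) * Bern n (k + r) x)). ring.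
    rewrite BF. ring. }
  assert (Ui : 0 < U n k l i) by (apply U_pos; lia).
  assert (Horth : forall j, (k <= j <= n - l)%nat -> wip al be D0 (Bern n j) (kron i j)).
  { intros j Hj. destruct Hg as [_ Hg2]. specialize (Hg2 (j - k)%nat ltac:(unfold N; lia)).
    assert (Uj : 0 < U n k l j) by (apply U_pos; lia).
    destruct (kron_U n k l i j ltac:(lia) ltac:(lia)) as [KU|KU]; [|lra].
    rewrite <- KU. unfold wip.
    apply (ii_ext (fun x => U n k l i / U n k l j * (weight (al + 2 * INR l) (be + 2 * INR k) x * g x * Bern N (j - k) x))).
    - intros x Hx. rewrite weight_shift by auto. rewrite HD0.
      pose proof (Bern_factor n k l j x ltac:(lia) ltac:(lia) Hkl) as BF. fold N in BF.
      replace (Bern n j x) with (x^k * (1-x)^l * Bern N (j - k) x / U n k l j) by (rewrite <- BF; field; lra).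
      field. lra.
    - apply ii_scal. exact Hg2. }
  assert (HPi0 : in_Pi n k l D0).
  { destruct Hg as [[e He] _].
    set (e' := fun m => if (m <=? N)%nat then e m else 0).
    assert (Ze : Zs e' N).
    { intros m Hm. unfold e'. destruct (m <=? N)%nat eqn:Em; auto. apply Nat.leb_le in Em. lia. }
    assert (Ve : forall x, g x = polyv e' N x).
    { intros x. rewrite He. unfold polyv. apply sum_eq. intros m Hm. unfold e'.
      assert (Em : (m <=? N)%nat = true) by (apply Nat.leb_le; lia). rewrite Em. ring. }
    destruct (build_k k N e' Ze) as [d1 [Z1 [P01 V1]]].
    destruct (build_l k l (N + k) d1 Z1 P01) as [d2 [Z2 [P02 [P12 V2]]]].
    replace (N + k + l)%nat with n in * by (unfold N; lia).
    apply (in_Pi_of n k l (fun m => U n k l i * d2 m)).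
    - lia.
    - intros m Hm. rewrite P02 by auto. ring.
    - intros j Hj. rewrite (sum_eq _ (fun m => d2 m * ffR m j * U n k l i)) by (intros; ring).
      rewrite <- scal_sum, P12 by auto. ring.
    - intros x. rewrite HD0, Ve.
      transitivity (U n k l i * polyv d2 n x).
      + rewrite V2, V1. ring.
      + unfold polyv. rewrite scal_sum. apply sum_eq. intros. ring. }
  split.
  { split; [exact HPi0 | exact Horth]. }
  intros D [HPiD HorthD] x.
  set (E := fun y => D y - D0 y).
  assert (HPiE : in_Pi n k l E) by (apply in_Pi_sub; auto).
  destruct (Pi_coeffs n k l E ltac:(lia) HPiE) as [dz [Zz [P0z [P1z Vz]]]].
  destruct (peel_l k l n dz ltac:(lia) Zz P1z P0z) as [q [Zq [P0q Vq]]].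
  assert (Vh : forall y, polyv q (n - l) y = y^k * polyv (fun m => q (k + m)%nat) N y).
  { intros y. rewrite (peel_k q (n - l) k Zq P0q ltac:(lia)).
    replace (n - l - k)%nat with N by (unfold N; lia). reflexivity. }
  destruct (span_polyv N (fun m => q (k + m)%nat) N (le_n N)) as [b Hb].
  assert (Erep : forall y, E y = sum_f_R0 (fun r => (b r * U n k l (k + r)) * Bern n (k + r) y) N).
  { intros y. rewrite Vz, Vq, Vh, Hb. rewrite scal_sum, scal_sum. apply sum_eq. intros r Hr.
    pose proof (Bern_factor n k l (k + r) y ltac:(lia) ltac:(unfold N in Hr; lia) Hkl) as BF.
    replace (k + r - k)%nat with r in BF by lia. fold N in BF.
    transitivity (b r * (U n k l (k + r) * Bern n (k + r) y)). 2: ring.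
    rewrite BF. ring. }
  assert (OE : forall j, (k <= j <= n - l)%nat -> improper_int01 (fun y => weight al be y * E y * Bern n j y) 0).
  { intros j Hj. pose proof (ii_lin _ _ _ _ (-1) (HorthD j Hj) (Horth j Hj)) as H.
    replace (kron i j + -1 * kron i j) with 0 in H by ring.
    eapply ii_ext; [| exact H]. intros y _. cbv beta. unfold E. ring. }
  assert (IEE : improper_int01 (fun y => weight al be y * E y * E y) 0).
  { eapply ii_ext; [| apply (ii_sum N (fun r => b r * U n k l (k + r)) (fun r y => weight al be y * E y * Bern n (k + r) y))].
    - intros y _. cbv beta.
      transitivity (weight al be y * E y * sum_f_R0 (fun r => (b r * U n k l (k + r)) * Bern n (k + r) y) N).
      + rewrite scal_sum. apply sum_eq. intros. ring.
      + rewrite <- Erep. reflexivity.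
    - intros r Hr. apply OE. unfold N in Hr; lia. }
  assert (Wpos : forall y, 0 < weight al be y).
  { intros y. unfold weight, Rpower. apply Rmult_lt_0_compat; apply exp_pos. }
  assert (Z0 : forall y, 0 < y < 1 -> weight al be y * E y * E y = 0).
  { apply ii_pos_zero; auto.
    - intros y Hy. pose proof (Wpos y). nra.
    - intros y Hy.
      apply (continuity_pt_locally_ext (fun y => weight al be y * polyv dz n y * polyv dz n y) _ 1 y); try lra.
      + intros z _. rewrite !Vz. reflexivity.
      + apply (continuity_pt_mult (fun y => weight al be y * polyv dz n y) (fun y => polyv dz n y)).
        * apply (continuity_pt_mult (weight al be) (fun y => polyv dz n y)).
          apply cont_weight; auto. apply cont_polyv.
        * apply cont_polyv. }
  assert (EZ : forall y, 0 < y < 1 -> polyv dz n y = 0).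
  { intros y Hy. rewrite <- Vz. specialize (Z0 y Hy). pose proof (Wpos y).
    rewrite Rmult_assoc in Z0. apply Rmult_integral in Z0. destruct Z0 as [Z0|Z0]. lra.
    apply Rmult_integral in Z0. destruct Z0; auto. }
  pose proof (poly_zero n dz EZ x) as H. rewrite <- Vz in H. unfold E in H. cbv beta in H. unfold D0 in H |- *. lra.
Qed.
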